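(* Let $k\in\mathbb{N}$ and let $u=a_1\cdots a_n$ be a word over a finite alphabet with attributes $(x_\ell,y_\ell)$. Let $i$ be the maximal position of $u$ such that $x_i+y_i>k+1$, and let $v=a_1\cdots a_{i-1}a_{i+1}\cdots a_n$, with $x'_\ell$ denoting the $x$-coordinate of position $\ell$ of $v$. Then $x'_{j-1}=x_j$ for all $j\in\{i+1,\dots,n\}$.
   Context: An X-ranker is a nonempty word over $\{\mathsf X_a : a\in A\}$, a Y-ranker a nonempty word over $\{\mathsf Y_a:a\in A\}$, length = word length. For a word $w$: $\mathsf X_a(w)$ is the smallest $a$-position, $r\mathsf X_a(w)$ the smallest $a$-position greater than $r(w)$; $\mathsf Y_a(w)$ the greatest $a$-position, $r\mathsf Y_a(w)$ the greatest $a$-position smaller than $r(w)$ (possibly undefined). The attribute of position $p$ of a word $w$ is $(x_p,y_p)$, where $x_p$ (the $x$-coordinate) is the minimal length of an X-ranker $r$ with $r(w)=p$ and $y_p$ is the minimal length of a Y-ranker $s$ with $s(w)=p$. *)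

(* Defs.v *)
From mathcomp Require Import all_boot.
Set Implicit Arguments. Unset Strict Implicit. Unset Printing Implicit Defensive.

(* Words over a finite alphabet A are sequences [w : seq A]; positions are
   1-indexed: position p (1 <= p <= size w) carries the letter nth _ w p.-1.
   A ranker X_{a1} ... X_{am} (resp. Y_{a1} ... Y_{am}) is represented by the
   nonempty sequence of letters [a1; ...; am], read left to right. *)

Section Rankers.
Variable A : finType.
Implicit Types (w r : seq A) (a : A).

Definition nextX w a (q : nat) : option nat :=
  let s := drop q w in
  let j := index a s in
  if j < size s then Some (q + j).+1 else None.

Definition prevY w a (q : nat) : option nat :=
  let s := rev (take q.-1 w) in
  let j := index a s in
  if j < size s then Some (q.-1 - j) else None.

(* X_{a1}(w) is the smallest a1-position, i.e. the smallest one > 0;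
   r X_a (w) is the smallest a-position > r(w). *)
Definition evalX w r : option nat :=
  foldl (fun o a => obind (nextX w a) o) (Some 0) r.

(* Y_{a1}(w) is the greatest a1-position, i.e. the greatest one < |w|+1;
   r Y_a (w) is the greatest a-position < r(w). *)
Definition evalY w r : option nat :=
  foldl (fun o a => obind (prevY w a) o) (Some (size w).+1) r.

Definition is_pos w (p : nat) : bool := (0 < p) && (p <= size w).

Definition xreach w p m : bool :=
  [exists r : m.-tuple A, (0 < m) && (evalX w r == Some p)].
Definition yreach w p m : bool :=
  [exists r : m.-tuple A, (0 < m) && (evalY w r == Some p)].
Lemma evalX_take w p : p <= size w -> evalX w (take p w) = Some p.
Proof.
elim: p => [|p IH] Hp; first by rewrite take0.
case: w Hp IH => [//|x0 w'] Hp IH.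
rewrite (take_nth x0 Hp) /evalX foldl_rcons.
have := IH (ltnW Hp); rewrite /evalX => ->.
rewrite [obind _ _]/= /nextX (drop_nth x0 Hp).
by rewrite [index _ _]/= eqxx addn0.
Qed.

Lemma evalY_drop w q : q <= size w -> evalY w (rev (drop q w)) = Some q.+1.
Proof.
move=> Hq; have [d Hd] : exists d, d = size w - q by eexists.
elim: d q Hq Hd => [|d IH] q Hq Hd.
  have -> : q = size w by apply/eqP; rewrite eqn_leq Hq /= -subn_eq0 -Hd.
  by rewrite drop_size.
have Hlt : q < size w by rewrite -subn_gt0 -Hd.
case: w Hq Hd IH Hlt => [//|x0 w'] Hq Hd IH Hlt.
rewrite (drop_nth x0 Hlt) rev_cons /evalY foldl_rcons.
have := IH q.+1 Hlt; rewrite /evalY => ->; last by rewrite subnS -Hd.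
rewrite [obind _ _]/= /prevY [_.-1]/= (take_nth x0 Hlt) rev_rcons.
by rewrite [index _ _]/= eqxx subn0.
Qed.

Definition xP w p : pred nat := fun m => xreach w p m || ~~ is_pos w p.
Definition yP w p : pred nat := fun m => yreach w p m || ~~ is_pos w p.

Lemma xP_ex w p : exists m, xP w p m.
Proof.
rewrite /xP; case Hp: (is_pos w p); last by exists 0; rewrite orbT.
move/andP: Hp => [H0 Hp]; exists p; rewrite orbF; apply/existsP.
have Hs : size (take p w) == p by rewrite size_take_min (minn_idPl Hp).
by exists (Tuple Hs); rewrite H0 /= evalX_take.
Qed.

Lemma yP_ex w p : exists m, yP w p m.
Proof.
rewrite /yP; case Hp: (is_pos w p); last by exists 0; rewrite orbT.
move/andP: Hp => [H0 Hp]; exists (size w - p.-1); rewrite orbF; apply/existsP.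
have Hs : size (rev (drop p.-1 w)) == size w - p.-1 by rewrite size_rev size_drop.
exists (Tuple Hs); rewrite subn_gt0 prednK // Hp /=.
by rewrite evalY_drop ?prednK // (leq_trans (leq_pred p) Hp).
Qed.

(* x-coordinate of position p of w: the minimal length of an X-ranker r
   with r(w) = p (set to 0 when p is not a position of w). *)
Definition xcoord w p : nat := ex_minn (xP_ex w p).
Definition ycoord w p : nat := ex_minn (yP_ex w p).

End Rankers.

(* Main.v *)
Require Import Defs.
From mathcomp Require Import all_boot.
From mathcomp Require Import zify.
Set Implicit Arguments. Unset Strict Implicit. Unset Printing Implicit Defensive.

Section S.
Variable A : finType.
Variable x0 : A.
Implicit Types (w r : seq A) (a b : A).

Definition noocc w a q p := forall t, q < t < p -> nth x0 w t.-1 != a.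

Lemma evalX_rcons w r a : evalX w (rcons r a) = obind (nextX w a) (evalX w r).
Proof. by rewrite /evalX foldl_rcons. Qed.
Lemma evalY_rcons w r a : evalY w (rcons r a) = obind (prevY w a) (evalY w r).
Proof. by rewrite /evalY foldl_rcons. Qed.

Lemma index_le a s t : t < size s -> nth x0 s t = a -> index a s <= t.
Proof.
move=> Ht Hn; rewrite leqNgt; apply/negP => /(before_find x0).
by rewrite Hn /= eqxx.
Qed.

Lemma nextX_spec w a q p : nextX w a q = Some p ->
  [/\ q < p <= size w, nth x0 w p.-1 = a & noocc w a q p].
Proof.
rewrite /nextX; set s := drop q w; case: ifP => // Hj [<-].
have Hs : size s = size w - q by rewrite size_drop.
split; first lia.
  by rewrite /= -nth_drop nth_index // -index_mem.
move=> t Ht; have Ht' : t.-1 - q < index a s by lia.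
have := before_find x0 Ht'; rewrite nth_drop /=.
have -> : q + (t.-1 - q) = t.-1 by lia.
by move=> ->.
Qed.

Lemma nextX_some w a q p : q < p <= size w -> nth x0 w p.-1 = a ->
  noocc w a q p -> nextX w a q = Some p.
Proof.
move=> Hp Ha Hn; rewrite /nextX; set s := drop q w.
have Hs : size s = size w - q by rewrite size_drop.
have Hn0 : nth x0 s (p.-1 - q) = a.
  by rewrite nth_drop; have -> : q + (p.-1 - q) = p.-1 by lia.
have Hle := index_le (_ : p.-1 - q < size s) Hn0.
have Hge : p.-1 - q <= index a s.
  rewrite leqNgt; apply/negP => Hlt.
  have Hm : index a s < size s by lia.
  have := nth_index x0 (_ : a \in s); rewrite -index_mem => /(_ Hm).
  rewrite nth_drop => Heq.
  have := Hn (q + index a s).+1; rewrite /= Heq eqxx; move=> H; have : false by apply: H; lia.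
  by [].
have -> : index a s = p.-1 - q by apply/eqP; rewrite eqn_leq Hge Hle //; lia.
rewrite ifT; last lia.
congr Some; lia.
Qed.

Lemma prevY_some w a p q : 0 < p < q -> q <= (size w).+1 -> nth x0 w p.-1 = a ->
  noocc w a p q -> prevY w a q = Some p.
Proof.
move=> Hp Hq Ha Hn; rewrite /prevY; set s := rev (take q.-1 w).
have Hs' : size (take q.-1 w) = q.-1 by rewrite size_take_min; apply/minn_idPl; lia.
have Hs : size s = q.-1 by rewrite size_rev.
have Hn0 : forall t, t < q.-1 -> nth x0 s t = nth x0 w (q.-1 - t.+1).
  move=> t Ht; rewrite nth_rev; last lia.
  rewrite Hs' nth_take; last lia.
  by congr nth; lia.
have Hn1 : nth x0 s (q.-1 - p) = a.
  by rewrite Hn0; last lia; have -> : q.-1 - (q.-1 - p).+1 = p.-1 by lia.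
have Hle := index_le (_ : q.-1 - p < size s) Hn1.
have Hge : q.-1 - p <= index a s.
  rewrite leqNgt; apply/negP => Hlt.
  have Hm : index a s < size s by lia.
  have := nth_index x0 (_ : a \in s); rewrite -index_mem => /(_ Hm).
  rewrite Hn0; last lia; move=> Heq.
  have := Hn (q.-1 - index a s); rewrite /=.
  have -> : (q.-1 - index a s).-1 = q.-1 - (index a s).+1 by lia.
  rewrite Heq eqxx; move=> H; have : false by apply: H; lia.
  by [].
have -> : index a s = q.-1 - p by apply/eqP; rewrite eqn_leq Hge Hle //; lia.
rewrite ifT; last lia.
congr Some; lia.
Qed.


Lemma xcoord0 w : xcoord w 0 = 0.
Proof.
rewrite /xcoord; case: ex_minnP => m _ Hmin; apply/eqP; rewrite -leqn0.
by apply: Hmin; rewrite /xP /is_pos ltnn orbT.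
Qed.

Lemma reachX w r p : p <= size w -> evalX w r = Some p -> xcoord w p <= size r.
Proof.
move=> Hp Hr; case: p Hp Hr => [|p] Hp Hr; first by rewrite xcoord0.
rewrite /xcoord; case: ex_minnP => m _ Hmin; apply: Hmin.
apply/orP; left; apply/existsP; exists (in_tuple r); rewrite /= Hr eqxx andbT.
by case: r Hr.
Qed.

Lemma witX w p : p <= size w -> exists r, size r = xcoord w p /\ evalX w r = Some p.
Proof.
case: p => [|p] Hp; first by exists [::]; rewrite xcoord0.
rewrite /xcoord; case: ex_minnP => m Hm _.
move: Hm; rewrite /xP /is_pos Hp /= orbF => /existsP [t /andP [_ /eqP Ht]].
by exists (val t); rewrite size_tuple.
Qed.

Lemma witY w p : 0 < p <= size w -> exists r, size r = ycoord w p /\ evalY w r = Some p.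
Proof.
move=> Hp; rewrite /ycoord; case: ex_minnP => m Hm _.
move: Hm; rewrite /yP /is_pos Hp /= orbF => /existsP [t /andP [_ /eqP Ht]].
by exists (val t); rewrite size_tuple.
Qed.

Lemma reachY w r p : 0 < p <= size w -> evalY w r = Some p -> 0 < size r ->
  ycoord w p <= size r.
Proof.
move=> Hp Hr Hs; rewrite /ycoord; case: ex_minnP => m _ Hmin; apply: Hmin.
apply/orP; left; apply/existsP; exists (in_tuple r); by rewrite /= Hr eqxx andbT.
Qed.

Lemma xA w b q p : q < p <= size w -> nth x0 w p.-1 = b -> noocc w b q p ->
  xcoord w p <= xcoord w q + 1.
Proof.
move=> Hp Hb Hn; have Hq : q <= size w by lia.
have [r [Hs Hr]] := witX Hq.
have Hp' : p <= size w by lia.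
have := reachX (r := rcons r b) Hp'.
by rewrite evalX_rcons Hr /= (nextX_some Hp Hb Hn) size_rcons Hs addn1; apply.
Qed.

Lemma xB w p : 0 < p <= size w -> exists q,
  [/\ q < p, noocc w (nth x0 w p.-1) q p & xcoord w p = xcoord w q + 1].
Proof.
move=> Hp; have Hp' : p <= size w by lia.
have [r [Hs Hr]] := witX Hp'.
case/lastP: r Hs Hr => [|r' b]; first by move=> _ [E]; lia.
rewrite evalX_rcons size_rcons; case E: (evalX w r') => [q|] //= Hs Hn.
have [Hqp Hb Hno] := nextX_spec Hn.
exists q; rewrite Hb; split; [lia | done | ].
have Hq' : q <= size w by lia.
have H1 := reachX Hq' E.
have H2 := xA Hqp Hb Hno.
lia.
Qed.

Lemma yA w b p q : 0 < p < q -> q <= size w -> nth x0 w p.-1 = b -> noocc w b p q ->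
  ycoord w p <= ycoord w q + 1.
Proof.
move=> Hp Hq Hb Hn; have Hq' : 0 < q <= size w by lia.
have [r [Hs Hr]] := witY Hq'.
have Hp' : 0 < p <= size w by lia.
have Hq2 : q <= (size w).+1 by lia.
have := reachY (r := rcons r b) Hp'.
rewrite evalY_rcons Hr /= (prevY_some Hp Hq2 Hb Hn) size_rcons Hs addn1.
by apply.
Qed.

Lemma prefix_le w1 w2 p : p <= size w1 -> p <= size w2 ->
  (forall t, t < p -> nth x0 w1 t = nth x0 w2 t) -> xcoord w1 p <= xcoord w2 p.
Proof.
elim/ltn_ind: p => p IH H1 H2 Hn.
case: p IH H1 H2 Hn => [|p] IH H1 H2 Hn; first by rewrite xcoord0.
have Hp2 : 0 < p.+1 <= size w2 by lia.
have [q [Hq Hno Heq]] := xB Hp2.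
rewrite Heq; apply: leq_trans (xA (q := q) (b := nth x0 w2 p.+1.-1) _ _ _) _.
- lia.
- by rewrite Hn.
- move=> t Ht; rewrite Hn; first exact: Hno. lia.
- rewrite leq_add2r; apply: IH => //; try lia.
  by move=> t Ht; apply: Hn; lia.
Qed.


Lemma mainl k (u : seq A) i : 0 < i <= size u -> k.+1 < xcoord u i + ycoord u i ->
  (forall l, i < l <= size u -> xcoord u l + ycoord u l <= k.+1) ->
  forall j, i < j <= size u -> xcoord (take i.-1 u ++ drop i u) j.-1 = xcoord u j.
Proof.
move=> Hi Hk Hl; set v := take i.-1 u ++ drop i u.
have Hst : size (take i.-1 u) = i.-1 by rewrite size_take_min; apply/minn_idPl; lia.
have Hsv : size v = (size u).-1 by rewrite size_cat Hst size_drop; lia.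
have Hnv : forall t, nth x0 v t = nth x0 u (if t < i.-1 then t else t.+1).
  move=> t; rewrite nth_cat Hst; case: ifP => H; first by rewrite nth_take.
  by rewrite nth_drop; congr nth; lia.
set a := nth x0 u i.-1.
have HK : forall l, i < l <= size u -> noocc u a i l -> xcoord u l <= xcoord u i.
  move=> l Hl' Hno.
  have Hil : 0 < i < l by lia.
  have Hls : l <= size u by lia.
  have := yA Hil Hls (erefl a) Hno; have := Hl l Hl'; lia.
have Hpre : forall p, p < i -> xcoord v p = xcoord u p.
  move=> p Hp; apply/eqP; rewrite eqn_leq !prefix_le //; try lia.
  - by move=> t Ht; rewrite Hnv ifT //; lia.
  - by move=> t Ht; rewrite Hnv ifT //; lia.
elim/ltn_ind => j IH Hj.
set b := nth x0 u j.-1.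
have Hb : nth x0 v (j.-1).-1 = b by rewrite Hnv ifF; [congr nth; lia | lia].
apply/eqP; rewrite eqn_leq; apply/andP; split.
- have Hj' : 0 < j <= size u by lia.
  have [q [Hqj Hno Heq]] := xB Hj'.
  case: (ltngtP q i) => Hqi.
  + have Hq1 : q < j.-1 <= size v by lia.
    have Hno' : noocc v b q j.-1.
      move=> t Ht; rewrite Hnv; case: ifP => Hti; first by apply: Hno; lia.
      have -> : (t.-1).+1 = (t.+1).-1 by lia.
      apply: Hno; lia.
    apply: leq_trans (xA Hq1 Hb Hno') _.
    by rewrite Hpre // Heq.
  + have Hq1 : q.-1 < j.-1 <= size v by lia.
    have Hno' : noocc v b q.-1 j.-1.
      move=> t Ht; rewrite Hnv ifF; last lia.
      have -> : (t.-1).+1 = (t.+1).-1 by lia.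
      apply: Hno; lia.
    apply: leq_trans (xA Hq1 Hb Hno') _.
    have Hq2 : q < j by lia.
    have Hq3 : i < q <= size u by lia.
    by rewrite (IH q Hq2 Hq3) Heq.
  + subst q.
    pose P := fun t => ((i < t < j) && (nth x0 u t.-1 == a)) || (t == j).
    have exP : exists t, P t by exists j; rewrite /P eqxx orbT.
    case: (ex_minnP exP) => l Pl Hmin.
    have Hil : i < l <= j.
      by case/orP: Pl => [/andP [H _] | /eqP ->]; lia.
    have Hnol : noocc u a i l.
      move=> t Ht; apply/negP => /eqP E.
      have : P t by rewrite /P E eqxx andbT; apply/orP; left; lia.
      by move/Hmin; lia.
    have Hl3 : i < l <= size u by lia.
    have HKl := HK l Hl3 Hnol.
    case/orP: Pl => [/andP [Hr /eqP Ea] | /eqP El].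
    * have Hl1 : l.-1 < j.-1 <= size v by lia.
      have Hno' : noocc v b l.-1 j.-1.
        move=> t Ht; rewrite Hnv ifF; last lia.
        have -> : (t.-1).+1 = (t.+1).-1 by lia.
        apply: Hno; lia.
      apply: leq_trans (xA Hl1 Hb Hno') _.
      have Hq2 : l < j by lia.
      have Hq3 : i < l <= size u by lia.
      rewrite (IH l Hq2 Hq3); lia.
    * subst l; lia.
- have Hj' : 0 < j.-1 <= size v by lia.
  have [q' [Hq' Hno Heq]] := xB Hj'.
  rewrite Hb in Hno.
  case: (leqP i q') => Hiq.
  + have Hq1 : q'.+1 < j <= size u by lia.
    have Hno' : noocc u b q'.+1 j.
      move=> t Ht; have := Hno t.-1 (_ : q' < t.-1 < j.-1).
      rewrite Hnv ifF; last lia.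
      have -> : (t.-1.-1).+1 = t.-1 by lia.
      by apply; lia.
    apply: leq_trans (xA Hq1 (erefl b) Hno') _.
    have Hq2 : q'.+1 < j by lia.
    have Hq3 : i < q'.+1 <= size u by lia.
    by rewrite -(IH _ Hq2 Hq3) /= Heq.
  + case: (eqVneq b a) => Eba.
    * have Hnoj : noocc u a i j.
        move=> t Ht; rewrite -Eba; have := Hno t.-1 (_ : q' < t.-1 < j.-1).
        rewrite Hnv ifF; last lia.
        have -> : (t.-1.-1).+1 = t.-1 by lia.
        by apply; lia.
      have HKj := HK j Hj Hnoj.
      have Hq1 : q' < i <= size u by lia.
      have Hnoi : noocc u a q' i.
        move=> t Ht; rewrite -Eba; have := Hno t (_ : q' < t < j.-1).
        rewrite Hnv ifT; last lia.
        by apply; lia.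
      have := xA Hq1 (erefl a) Hnoi.
      rewrite Heq Hpre //; lia.
    * have Hq1 : q' < j <= size u by lia.
      have Hno' : noocc u b q' j.
        move=> t Ht; case: (ltngtP t i) => Hti.
        - have := Hno t (_ : q' < t < j.-1); rewrite Hnv ifT; last lia.
          by apply; lia.
        - have := Hno t.-1 (_ : q' < t.-1 < j.-1).
          rewrite Hnv ifF; last lia.
          have -> : (t.-1.-1).+1 = t.-1 by lia.
          by apply; lia.
        - by subst t; rewrite eq_sym.
      apply: leq_trans (xA Hq1 (erefl b) Hno') _.
      by rewrite -Hpre // Heq.
Qed.

End S.

Unset Implicit Arguments.

Theorem lemma17 (A : finType) (k : nat) (u : seq A) (i : nat) :
  0 < i <= size u ->
  k.+1 < xcoord u i + ycoord u i ->
  (forall l, i < l <= size u -> xcoord u l + ycoord u l <= k.+1) ->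
  let v := take i.-1 u ++ drop i u in
  forall j, i < j <= size u -> xcoord v j.-1 = xcoord u j.
Proof.
move=> Hi Hk Hl v j Hj; rewrite /v; clear v.
case: u Hi Hk Hl Hj => [|x0 u'] Hi Hk Hl Hj; first by simpl in Hi; lia.
exact: (mainl x0 Hi Hk Hl Hj).
Qed.
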